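(* Let $\pi=\mathcal{N}(\mu,Q^{-1})$ and $q=\mathcal{N}(\mu',\widetilde{Q}^{-1})$ be Gaussian distributions on $\mathbb{R}^p$, where $Q$ is positive definite and partitioned into blocks, and $\widetilde{Q}$ is the block-diagonal matrix having the same diagonal blocks as $Q$ and zeros elsewhere. Let $\bar{Q}=\widetilde{Q}^{-1/2}Q\widetilde{Q}^{-1/2}$. Let $k\ne\ell$ be two block indices and $v_k,v_\ell\in\mathbb{R}^p\setminus\{0\}$ vectors such that $v_k$ is zero outside block $k$ and $v_\ell$ is zero outside block $\ell$. Then $$UQF(q\Vert\pi)\le1-\frac{v_k^T\bar{Q}v_\ell}{\|v_k\|\,\|v_\ell\|}.$$
   Context: The uncertainty quantification fraction is $UQF(q\Vert\pi)=\inf_{v\in\mathbb{R}^p\setminus\{0\}}\frac{\mathrm{var}_{q}(\theta^Tv)}{\mathrm{var}_{\pi}(\theta^Tv)}$. Matrix square roots are symmetric positive definite square roots. *)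

(* Defs.v *)
From HB Require Import structures.
From mathcomp Require Import all_boot all_order all_algebra.
From mathcomp Require Import boolp classical_sets reals.
Set Implicit Arguments. Unset Strict Implicit. Unset Printing Implicit Defensive.
Import Order.TTheory GRing.Theory Num.Theory.
Local Open Scope ring_scope.
Local Open Scope classical_set_scope.

Definition posdef {R : realType} {p : nat} (A : 'M[R]_p) : Prop :=
  A^T = A /\ forall v : 'cV[R]_p, v != 0 -> 0 < (v^T *m A *m v) 0 0.

(* The Gaussian N(mu, Q^-1) on R^p, given by its mean mu and precision Q,
   is encoded by its parameters.  The variance of the linear functional
   theta |-> theta^T v under N(mu, Q^-1) is v^T Q^-1 v. *)
Record gaussian (R : realType) (p : nat) := Gaussian {
  g_mean : 'cV[R]_p;
  g_prec : 'M[R]_p }.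

Definition gvar {R : realType} {p : nat} (g : gaussian R p) (v : 'cV[R]_p) : R :=
  (v^T *m invmx (g_prec g) *m v) 0 0.

Definition UQF {R : realType} {p : nat} (q pi : gaussian R p) : R :=
  inf [set r : R | exists v : 'cV[R]_p, v != 0 /\ r = gvar q v / gvar pi v].

(* Block-diagonal part of Q for the block structure given by
   blk : 'I_p -> 'I_m (index i belongs to block blk i). *)
Definition blockdiag {R : realType} {p m : nat} (blk : 'I_p -> 'I_m)
  (Q : 'M[R]_p) : 'M[R]_p :=
  \matrix_(i, j) (if blk i == blk j then Q i j else 0).

Definition vnorm {R : realType} {p : nat} (v : 'cV[R]_p) : R :=
  Num.sqrt ((v^T *m v) 0 0).

(* Main.v *)
Require Import Defs.
From HB Require Import structures.
From mathcomp Require Import all_boot all_order all_algebra.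
From mathcomp Require Import boolp classical_sets reals.
From mathcomp Require Import ring lra.
Import Order.TTheory GRing.Theory Num.Theory.
Local Open Scope ring_scope.

Section H.
Context {R : realType}.
Context {p : nat}.
Implicit Types (x y z : 'cV[R]_p) (A B : 'M[R]_p).

Definition bf x A y : R := (x^T *m A *m y) 0 0.

Lemma bfE x A y : bf x A y = \sum_j (\sum_i x i 0 * A i j) * y j 0.
Proof. rewrite /bf mxE; apply: eq_bigr => j _; rewrite mxE; congr (_ * _).
by apply: eq_bigr => i _; rewrite mxE. Qed.

Lemma bfDl x y A z : bf (x + y) A z = bf x A z + bf y A z.
Proof. by rewrite /bf linearD /= !mulmxDl mxE. Qed.
Lemma bfDr x y A z : bf z A (x + y) = bf z A x + bf z A y.
Proof. by rewrite /bf mulmxDr mxE. Qed.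
Lemma bfZl a x A z : bf (a *: x) A z = a * bf x A z.
Proof. by rewrite /bf linearZ /= -!scalemxAl mxE. Qed.
Lemma bfZr a x A z : bf z A (a *: x) = a * bf z A x.
Proof. by rewrite /bf -scalemxAr mxE. Qed.
Lemma bfNl x A z : bf (- x) A z = - bf x A z.
Proof. by rewrite -scaleN1r bfZl mulN1r. Qed.
Lemma bfNr x A z : bf z A (- x) = - bf z A x.
Proof. by rewrite -scaleN1r bfZr mulN1r. Qed.

Lemma bf_sym x A y : A^T = A -> bf x A y = bf y A x.
Proof.
move=> HA; rewrite /bf.
have -> : (y^T *m A *m x) 0 0 = ((y^T *m A *m x)^T) 0 0 by rewrite [RHS]mxE.
by rewrite !trmx_mul trmxK HA mulmxA.
Qed.

Lemma bf_mull x A B y : bf x (A *m B) y = bf (A^T *m x) B y.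
Proof. by rewrite /bf trmx_mul trmxK !mulmxA. Qed.
Lemma bf_mulr x A B y : bf x (A *m B) y = bf x A (B *m y).
Proof. by rewrite /bf !mulmxA. Qed.

Lemma bf_ge0 x A : posdef A -> 0 <= bf x A x.
Proof.
move=> [_ HA]; have [->|nz] := eqVneq x 0.
  by rewrite /bf mulmx0 mxE.
exact: ltW (HA _ nz).
Qed.

Lemma bf_eq0 x A : posdef A -> bf x A x = 0 -> x = 0.
Proof.
move=> [_ HA] h; apply/eqP; apply/negPn/negP => nz.
by move: (HA _ nz); rewrite -/(bf x A x) h ltxx.
Qed.

Lemma posdef_unit A : posdef A -> A \in unitmx.
Proof.
move=> hA; rewrite unitmxE unitfE; apply/negP => /det0P [v nz vA].
have h : bf v^T A v^T = 0 by rewrite /bf trmxK vA mul0mx mxE.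
move: (bf_eq0 _ _ hA h) => /(congr1 trmx); rewrite trmxK trmx0 => e.
by rewrite e eqxx in nz.
Qed.



Lemma CS x y A : posdef A -> bf x A y ^+ 2 <= bf x A x * bf y A y.
Proof.
move=> hA; have sA : A^T = A by case: hA.
have [->|nz] := eqVneq y 0.
  by rewrite /bf !mulmx0 !mxE expr0n mulr0.
set c := bf x A y; set d := bf y A y; set e := bf x A x.
have dpos : 0 < d by case: hA => _ h; exact: h.
have := bf_ge0 (x - (c / d) *: y) A hA.
rewrite bfDl !bfDr bfNl !bfNr !bfZl !bfZr -/c -/d -/e (bf_sym y A x sA) -/c.
move=> h; rewrite ?bfNl ?bfZl -/d in h.
rewrite -subr_ge0.
have -> : e * d - c ^+ 2 = d * (e - c / d * c + (- (c / d * c) - c / d * (- (c / d * d)))).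
  by field; rewrite gt_eqF.
by rewrite mulr_ge0 // ltW.
Qed.


Lemma tr_bf (X A : 'M[R]_p) : X^T = X ->
  \tr (X *m A *m X) = \sum_i bf (col i X) A (col i X).
Proof.
move=> sX; rewrite /mxtrace; apply: eq_bigr => i _.
rewrite bfE mxE; apply: eq_bigr => j _; rewrite !mxE; congr (_ * _).
apply: eq_bigr => k _; rewrite !mxE.
by rewrite -{1}sX mxE.
Qed.

Lemma sqrt_unique (S S' : 'M[R]_p) : posdef S -> S'^T = S' ->
  (forall v, 0 <= bf v S' v) -> S *m S = S' *m S' -> S = S'.
Proof.
move=> hS sS' pS' eq2; have sS : S^T = S by case: hS.
set X := S - S'.
have sX : X^T = X by rewrite /X linearB /= sS sS'.
have e1 : S *m X + X *m S' = 0.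
  by rewrite /X mulmxBr !mulmxBl eq2 addrA subrK subrr.
have e2 : \tr (X *m S *m X) + \tr (X *m S' *m X) = 0.
  have : \tr (X *m (S *m X + X *m S')) = 0 by rewrite e1 mulmx0 mxtrace0.
  rewrite mulmxDr mxtraceD -!mulmxA (mxtrace_mulC X (X *m S')) -mulmxA.
  done.
rewrite !tr_bf // in e2.
have h0 : forall i, bf (col i X) S (col i X) = 0.
  move=> i; apply: (psumr_eq0P (P := predT)
     (F := fun i => bf (col i X) S (col i X))) => //.
    by move=> j _; apply: bf_ge0.
  apply/eqP; rewrite eq_le; apply/andP; split; last by apply: sumr_ge0 => j _; apply: bf_ge0.
  move/eqP: e2; rewrite addr_eq0 => /eqP ->; rewrite oppr_le0.
  by apply: sumr_ge0 => j _; apply: pS'.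
apply/eqP; rewrite -subr_eq0; apply/eqP/matrixP => i j.
have := bf_eq0 _ _ hS (h0 j) => /matrixP /(_ i 0).
by rewrite !mxE.
Qed.


Context {m : nat}.
Context (blk : 'I_p -> 'I_m).

Definition sgn (k : 'I_m) : 'M[R]_p :=
  diag_mx (\row_i (if blk i == k then 1 else -1)).

Lemma sgn_tr k : (sgn k)^T = sgn k.
Proof. exact: tr_diag_mx. Qed.

Lemma sgn_sq k : sgn k *m sgn k = 1%:M.
Proof.
rewrite /sgn mul_diag_mx; apply/matrixP => i j; rewrite !mxE.
rewrite mulrnAr; congr (_ *+ _).
by case: ifP; rewrite ?mulr1 ?mulrNN ?mulr1.
Qed.

Lemma sgn_bd k (Q : 'M[R]_p) :
  sgn k *m blockdiag blk Q *m sgn k = blockdiag blk Q.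
Proof.
rewrite /sgn mul_diag_mx mul_mx_diag; apply/matrixP => i j; rewrite !mxE.
case: (eqVneq (blk i) (blk j)) => [e|_]; last by rewrite !mulr0 mul0r.
by rewrite e; case: ifP; rewrite ?mulr1 ?mul1r ?mulN1r ?mulrN1 ?opprK.
Qed.

Lemma sgn_fix k (x : 'cV[R]_p) : (forall i, blk i != k -> x i 0 = 0) ->
  sgn k *m x = x.
Proof.
move=> h; rewrite /sgn mul_diag_mx; apply/matrixP => i j; rewrite !mxE (ord1 j).
case: (eqVneq (blk i) k) => [_|ne]; first by rewrite mul1r.
by rewrite h // mulr0.
Qed.

Lemma sgn_supp k (x : 'cV[R]_p) : sgn k *m x = x ->
  forall i, blk i != k -> x i 0 = 0.
Proof.
rewrite /sgn mul_diag_mx => /matrixP h i ne; move: (h i 0); rewrite !mxE.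
rewrite (negbTE ne) mulN1r => e.
have : x i 0 *+ 2 == 0 by rewrite mulr2n -{1}e addNr.
by rewrite mulrn_eq0 /= => /eqP.
Qed.


Lemma bf_movl x A B y : bf (A *m x) B y = bf x (A^T *m B) y.
Proof. by rewrite /bf trmx_mul !mulmxA. Qed.
Lemma bf_movr x A B y : bf x B (A *m y) = bf x (B *m A) y.
Proof. by rewrite /bf !mulmxA. Qed.

Lemma bf1E x y : bf x 1%:M y = \sum_i x i 0 * y i 0.
Proof. by rewrite /bf mulmx1 mxE; apply: eq_bigr => i _; rewrite mxE. Qed.

Lemma bf1_gt0 x : x != 0 -> 0 < bf x 1%:M x.
Proof.
move=> nz; rewrite bf1E lt_def; apply/andP; split; last first.
  by apply: sumr_ge0 => i _; rewrite -expr2 sqr_ge0.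
apply/negP => /eqP h; move/negP: nz; apply; apply/eqP/matrixP => i j.
rewrite (ord1 j) mxE.
have hn : forall k, predT k -> 0 <= x k 0 * x k 0.
  by move=> k _; rewrite -expr2 sqr_ge0.
have := psumr_eq0P (P := predT) (F := fun i => x i 0 * x i 0) hn h (i := i) isT.
by move=> /eqP; rewrite mulf_eq0 orbb => /eqP.
Qed.

Lemma bf_block k x y (Q : 'M[R]_p) :
  (forall i, blk i != k -> x i 0 = 0) -> (forall i, blk i != k -> y i 0 = 0) ->
  bf x Q y = bf x (blockdiag blk Q) y.
Proof.
move=> hx hy; rewrite !bfE; apply: eq_bigr => j _.
case: (eqVneq (blk j) k) => [ej|nj]; last by rewrite hy // !mulr0.
congr (_ * _); apply: eq_bigr => i _.
case: (eqVneq (blk i) k) => [ei|ni]; last by rewrite hx // !mul0r.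
by rewrite mxE ei ej eqxx.
Qed.

End H.

Local Open Scope classical_set_scope.

Theorem mainTheorem7 (R : realType) (p m : nat) (blk : 'I_p -> 'I_m)
  (mu mu' : 'cV[R]_p) (Q : 'M[R]_p) (S : 'M[R]_p)
  (k l : 'I_m) (vk vl : 'cV[R]_p) :
  posdef Q ->
  (* S = Qtilde^{-1/2}: the symmetric positive definite square root of Qtilde^{-1} *)
  posdef S -> S *m S = invmx (blockdiag blk Q) ->
  k != l ->
  vk != 0 -> vl != 0 ->
  (forall i, blk i != k -> vk i 0 = 0) ->
  (forall i, blk i != l -> vl i 0 = 0) ->
  UQF (Gaussian mu' (blockdiag blk Q)) (Gaussian mu Q)
    <= 1 - (vk^T *m (S *m Q *m S) *m vl) 0 0 / (vnorm vk * vnorm vl).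
Proof.
move=> hQ hS eS kl vk0 vl0 hk hl.
have sQ : Q^T = Q by case: hQ.
have sS : S^T = S by case: hS.
have uQ := posdef_unit _ hQ; have uS := posdef_unit _ hS.
have uSS : S *m S \in unitmx by rewrite unitmx_mul uS.
set D := blockdiag blk Q.
have uD : D \in unitmx.
  case: (boolP (D \in unitmx)) => // nD.
  have e : invmx D = D by apply: invmx_out; rewrite inE.
  by move: uSS; rewrite eS e (negbTE nD).
set T := invmx D.
have TD : T *m D = 1%:M by apply: mulVmx.
have DT : D *m T = 1%:M by apply: mulmxV.
have ST : S *m T = T *m S by rewrite /T -eS mulmxA.
have SD : S *m D = D *m S.
  have : D *m (S *m T) *m D = D *m (T *m S) *m D by rewrite ST.
  rewrite !mulmxA DT mul1mx -!mulmxA TD mulmx1 => ->; done.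
have SDS : S *m D *m S = 1%:M by rewrite SD -mulmxA eS DT.
have Scomm : forall k0, sgn blk k0 *m S = S *m sgn blk k0.
  move=> k0; set P := sgn blk k0.
  have PP : P *m P = 1%:M := sgn_sq blk k0.
  have sP : P^T = P := sgn_tr blk k0.
  have PD : P *m D *m P = D := sgn_bd blk k0 Q.
  have PTP : P *m T *m P = T.
    have h1 : P *m T *m P *m D = 1%:M.
      rewrite -{1}PD !mulmxA -(mulmxA _ P P) PP mulmx1 -(mulmxA _ T D) TD mulmx1 PP.
      done.
    by rewrite -[LHS](mulmxK uD) h1 mul1mx.
  have e : S = P *m S *m P.
    apply: sqrt_unique => //.
    - by rewrite !trmx_mul sP sS mulmxA.
    - by move=> v; rewrite -mulmxA bf_mull bf_mulr sP; apply: bf_ge0.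
    - rewrite eS -/T -PTP.
      rewrite !mulmxA -(mulmxA _ P P) PP mulmx1 -(mulmxA _ S S) eS -/T.
      done.
  by rewrite {2}e -mulmxA PP mulmx1.
have supp : forall k0 (x : 'cV[R]_p), (forall i, blk i != k0 -> x i 0 = 0) ->
    forall i, blk i != k0 -> (S *m x) i 0 = 0.
  move=> k0 x hx; apply: sgn_supp.
  by rewrite mulmxA Scomm -mulmxA sgn_fix.
have qform : forall k0 (x : 'cV[R]_p), (forall i, blk i != k0 -> x i 0 = 0) ->
    bf x (S *m Q *m S) x = bf x 1%:M x.
  move=> k0 x hx.
  rewrite -bf_movr bf_mull sS (bf_block blk k0 _ _ Q (supp k0 x hx) (supp k0 x hx)) -/D.
  by rewrite bf_movr bf_movl sS mulmxA SDS.
set Qb := S *m Q *m S.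
have sQb : Qb^T = Qb by rewrite /Qb !trmx_mul sS sQ mulmxA.
have ak := qform k vk hk; have al := qform l vl hl; rewrite -/Qb in ak al.
have orth : bf vk 1%:M vl = 0.
  rewrite bf1E big1 // => i _.
  case: (eqVneq (blk i) k) => [e|ne]; last by rewrite hk // mul0r.
  by rewrite hl ?mulr0 // e.
have orth' : bf vl 1%:M vk = 0 by rewrite bf_sym ?trmx1.
set a2 := bf vk 1%:M vk; set b2 := bf vl 1%:M vl.
have a2p : 0 < a2 := bf1_gt0 _ vk0.
have b2p : 0 < b2 := bf1_gt0 _ vl0.
set al_ := vnorm vk; set be_ := vnorm vl.
have a2E : a2 = (vk^T *m vk) 0 0 by rewrite /a2 /bf mulmx1.
have b2E : b2 = (vl^T *m vl) 0 0 by rewrite /b2 /bf mulmx1.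
have alE : al_ ^+ 2 = a2 by rewrite /al_ /vnorm -a2E sqr_sqrtr // ltW.
have beE : be_ ^+ 2 = b2 by rewrite /be_ /vnorm -b2E sqr_sqrtr // ltW.
have alp : 0 < al_ by rewrite /al_ /vnorm -a2E sqrtr_gt0.
have bep : 0 < be_ by rewrite /be_ /vnorm -b2E sqrtr_gt0.
change (UQF (Gaussian mu' D) (Gaussian mu Q) <= 1 - bf vk Qb vl / (al_ * be_)).
set c := bf vk Qb vl.
have c' : bf vl Qb vk = c by rewrite bf_sym.
set w := be_ *: vk - al_ *: vl.
set ww := bf w 1%:M w.
have wwE : ww = 2 * al_ ^+ 2 * be_ ^+ 2.
  rewrite /ww /w bfDl !bfDr !bfNl !bfNr !bfZl !bfZr ?bfZl orth orth' -/a2 -/b2 -alE -beE.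
  ring.
have wQwE : bf w Qb w = 2 * al_ ^+ 2 * be_ ^+ 2 - 2 * al_ * be_ * c.
  rewrite /w bfDl !bfDr !bfNl !bfNr !bfZl !bfZr ?bfZl ak al c' -/c -/a2 -/b2 -alE -beE.
  ring.
have wwp : 0 < ww by rewrite wwE !mulr_gt0 // exprn_gt0.
set v := invmx S *m w.
have Sv : S *m v = w by rewrite /v mulKVmx.
have v0 : v != 0.
  apply/eqP => v0; move: wwp; rewrite /ww -Sv v0 mulmx0 /bf mulmx0 mxE ltxx.
  done.
set iQ := invmx Q.
have siQ : iQ^T = iQ by rewrite /iQ trmx_inv sQ.
have iQQ : iQ *m Q = 1%:M by apply: mulVmx.
have gE : forall u, bf u iQ u = bf (iQ *m u) Q (iQ *m u).
  by move=> u; rewrite bf_movl bf_movr siQ iQQ mul1mx.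
set g := bf v iQ v.
have gp : 0 < g.
  rewrite /g gE; case: hQ => _; apply.
  apply/eqP => e; move/eqP: v0; apply.
  by rewrite -(mulKVmx uQ v) -/iQ e mulmx0.
have gq0 : forall u, gvar (Gaussian mu' D) u = bf u T u by [].
have gq : forall u, gvar (Gaussian mu' D) u = bf (S *m u) 1%:M (S *m u).
  by move=> u; rewrite bf_movl bf_movr sS mulmx1 eS.
have cs := CS (iQ *m v) (S *m w) Q hQ.
have e1 : bf (iQ *m v) Q (S *m w) = ww.
  rewrite bf_movl siQ iQQ bf_movr mul1mx /ww -{2}Sv bf_movl sS mulmx1.
  done.
have e2 : bf (S *m w) Q (S *m w) = bf w Qb w.
  by rewrite bf_movl bf_movr sS.
rewrite e1 e2 -gE -/g in cs.
set E := [set r : R | exists u : 'cV[R]_p, u != 0 /\ r = gvar (Gaussian mu' D) u / gvar (Gaussian mu Q) u].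
have lb : has_lbound E.
  exists 0 => r [u [_ ->]]; apply: divr_ge0.
    by rewrite gq bf1E; apply: sumr_ge0 => i _; rewrite -expr2 sqr_ge0.
  by change (0 <= bf u iQ u); rewrite gE; apply: bf_ge0.
have mem : E (ww / g) by exists v; split => //; rewrite gq Sv.
apply: le_trans (ge_inf lb mem) _.
have -> : 1 - c / (al_ * be_) = bf w Qb w / ww.
  rewrite wQwE wwE; field.
  by rewrite !gt_eqF.
rewrite ler_pdivrMr // mulrAC ler_pdivlMr //.
by rewrite -expr2 mulrC.
Qed.
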